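(* Let $f_1,\dots,f_n:\mathbb{R}^d\to\mathbb{R}$ be continuously differentiable, where $f_i$ has ${\bm L}_i$-Lipschitz gradient with ${\bm L}_i\in\mathbb{S}^d_{++}$, and $f=\frac1n\sum_i f_i$. If ${\bm L}\in\mathbb{S}^d_{++}$ satisfies $${\bm L}\,\lambda_{\min}({\bm L})=\frac1n\sum_{i=1}^n\lambda_{\max}({\bm L}_i)\,{\bm L}_i,$$ then $f$ has ${\bm L}$-Lipschitz gradient.
   Context: $\mathbb{S}^d_{++}$: symmetric positive definite matrices; $\|x\|_{\bm M}^2:=x^\top{\bm M}x$; $\lambda_{\max},\lambda_{\min}$: largest/smallest eigenvalue. A differentiable $g$ has ${\bm L}$-Lipschitz gradient if $\|\nabla g(x)-\nabla g(y)\|_{{\bm L}^{-1}}\le\|x-y\|_{\bm L}$ for all $x,y\in\mathbb{R}^d$. *)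

(* Defs.v *)
From HB Require Import structures.
From mathcomp Require Import all_boot all_order all_algebra.
From mathcomp Require Import all_classical all_reals all_analysis.
Set Implicit Arguments. Unset Strict Implicit. Unset Printing Implicit Defensive.
Import Order.TTheory GRing.Theory Num.Theory.
Import numFieldNormedType.Exports.
Local Open Scope classical_set_scope.
Local Open Scope ring_scope.

Definition qform {R : realType} {d : nat} (M : 'M[R]_d) (x : 'rV[R]_d) : R :=
  (x *m M *m x^T) 0 0.

Definition spd {R : realType} {d : nat} (M : 'M[R]_d) : Prop :=
  M^T = M /\ forall x : 'rV[R]_d, x != 0 -> 0 < qform M x.

Definition lambda_max {R : realType} {d : nat} (M : 'M[R]_d) : R :=
  sup [set a : R | eigenvalue M a].
Definition lambda_min {R : realType} {d : nat} (M : 'M[R]_d) : R :=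
  inf [set a : R | eigenvalue M a].

Definition grad {R : realType} {d : nat} (f : 'rV[R]_d -> R) (x : 'rV[R]_d)
  : 'rV[R]_d := \row_(j < d) ('D_(delta_mx 0 j) f x).

Definition C1 {R : realType} {d : nat} (f : 'rV[R]_d -> R) : Prop :=
  (forall x, differentiable f x) /\ continuous (grad f).

Definition lipschitz_grad {R : realType} {d : nat} (L : 'M[R]_d)
  (g : 'rV[R]_d -> R) : Prop :=
  forall x y : 'rV[R]_d,
    Num.sqrt (qform (invmx L) (grad g x - grad g y)) <= Num.sqrt (qform L (x - y)).

(* Main.v *)
Require Import Defs.
From HB Require Import structures.
From mathcomp Require Import all_boot all_order all_algebra.
From mathcomp Require Import all_classical all_reals all_analysis.
From mathcomp Require Import ring lra.
Set Implicit Arguments. Unset Strict Implicit. Unset Printing Implicit Defensive.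
Import Order.TTheory GRing.Theory Num.Theory.
Import numFieldNormedType.Exports.
Local Open Scope classical_set_scope.
Local Open Scope ring_scope.

Section QF.
Variables (R : realType) (d : nat).
Implicit Types (M N : 'M[R]_d) (x y : 'rV[R]_d).

Definition bf M x y := (x *m M *m y^T) 0 0.

Lemma qformE M x : qform M x = \sum_j (\sum_i x 0 i * M i j) * x 0 j.
Proof. by rewrite /qform !mxE; apply: eq_bigr => j _; rewrite !mxE. Qed.

Lemma qform1E x : qform 1 x = \sum_j x 0 j ^+ 2.
Proof. by rewrite /qform mulmx1 mxE; apply: eq_bigr => j _; rewrite mxE expr2. Qed.

Lemma qform1_ge0 x : 0 <= qform 1 x.
Proof. by rewrite qform1E sumr_ge0 // => j _; rewrite sqr_ge0. Qed.

Lemma qform1_eq0 x : qform 1 x = 0 -> x = 0.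
Proof.
rewrite qform1E => /eqP; rewrite psumr_eq0; last by move=> j _; rewrite sqr_ge0.
move=> /allP H; apply/rowP => j; rewrite mxE.
by have := H j (mem_index_enum j); rewrite /= sqrf_eq0 => /eqP.
Qed.

Lemma qform1_gt0 x : x != 0 -> 0 < qform 1 x.
Proof.
move=> x0; rewrite lt_def qform1_ge0 andbT; apply/eqP => /qform1_eq0 H.
by rewrite H eqxx in x0.
Qed.

Lemma qformD M N x : qform (M + N) x = qform M x + qform N x.
Proof. by rewrite /qform mulmxDr mulmxDl mxE. Qed.

Lemma qformZ a M x : qform (a *: M) x = a * qform M x.
Proof. by rewrite /qform -scalemxAr -scalemxAl mxE. Qed.

Lemma qformN M x : qform (- M) x = - qform M x.
Proof. by rewrite -scaleN1r qformZ mulN1r. Qed.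

Lemma qformB M N x : qform (M - N) x = qform M x - qform N x.
Proof. by rewrite qformD qformN. Qed.

Lemma qform0 x : qform 0 x = 0.
Proof. by rewrite /qform mulmx0 mul0mx mxE. Qed.

Lemma qform_sum n (F : 'I_n -> 'M[R]_d) x :
  qform (\sum_(i < n) F i) x = \sum_(i < n) qform (F i) x.
Proof.
apply: (big_rec2 (fun a b => qform a x = b)); first exact: qform0.
by move=> i a b _ <-; rewrite qformD.
Qed.

Lemma qform_scale M a x : qform M (a *: x) = a ^+ 2 * qform M x.
Proof.
by rewrite /qform linearZ /= -!scalemxAl -scalemxAr scalerA mxE expr2.
Qed.

Lemma qform_scalar a x : qform a%:M x = a * qform 1 x.
Proof. by rewrite -scalemx1 qformZ. Qed.

Lemma bf_sym M x y : M^T = M -> bf M x y = bf M y x.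
Proof.
move=> MT; rewrite /bf -[in LHS](trmxK (_ *m _ *m _)) [in LHS]mxE.
by rewrite !trmx_mul trmxK MT mulmxA.
Qed.

Lemma qform_addv M x y : M^T = M ->
  qform M (x + y) = qform M x + 2 * bf M x y + qform M y.
Proof.
move=> MT; rewrite /qform /bf linearD /= !mulmxDl !mulmxDr.
have := @bf_sym M y x MT; rewrite /bf !mxE => ->; ring.
Qed.

End QF.
Lemma aux_zero (R : realType) (s Q : R) : 0 <= Q ->
  (forall t, 0 <= 2 * t * s + t ^+ 2 * Q) -> s = 0.
Proof.
move=> Q0 H.
have k0 : 0 < Q + 1 by lra.
have := H (- s / (Q + 1)).
set t := - s / (Q + 1).
have tk : t * (Q + 1) = - s by rewrite /t mulrAC -mulrA divff ?mulr1 // gt_eqF.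
move=> Ht.
have : 0 <= (Q + 1) ^+ 2 * (2 * t * s + t ^+ 2 * Q) by rewrite mulr_ge0 // sqr_ge0.
have -> : (Q + 1) ^+ 2 * (2 * t * s + t ^+ 2 * Q) =
   2 * (t * (Q + 1)) * s * (Q + 1) + (t * (Q + 1)) ^+ 2 * Q by ring.
rewrite tk => H2.
have : s ^+ 2 * (Q + 2) <= 0 by move: H2; rewrite !expr2; lra.
move=> H3.
have H4 : s ^+ 2 <= 0 by move: H3; rewrite !expr2; nra.
have : s ^+ 2 = 0 by apply/le_anti; rewrite H4 sqr_ge0.
by move/eqP; rewrite sqrf_eq0 => /eqP.
Qed.

Lemma bfZr (R : realType) d (B : 'M[R]_d) v w t : bf B v (t *: w) = t * bf B v w.
Proof. by rewrite /bf linearZ /= -scalemxAr mxE. Qed.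

Lemma psd_zero (R : realType) d (B : 'M[R]_d) v : B^T = B ->
  (forall x, 0 <= qform B x) -> qform B v = 0 -> v *m B = 0.
Proof.
move=> BT psd qv; set w := v *m B.
have bvw : bf B v w = qform 1 w by rewrite /bf /qform mulmx1.
have Q0 : 0 <= qform B w by [].
have : qform 1 w = 0.
  apply: (aux_zero Q0) => t.
  have := psd (v + t *: w); rewrite qform_addv // qv bfZr bvw qform_scale.
  by rewrite add0r mulrA.
exact: qform1_eq0.
Qed.

Lemma sum_cont (R : realType) (T : topologicalType) n (f : 'I_n -> T -> R) :
  (forall i, continuous (f i)) -> continuous (fun x => \sum_(i < n) f i x).
Proof.
move=> H; rewrite -fct_sumE.
apply: (big_ind (fun g : T -> R => continuous g)).
- move=> x; exact: cst_continuous.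
- by move=> g h cg ch x; apply: continuousD; [exact: cg|exact: ch].
- by move=> i _; exact: H.
Qed.

Lemma qform_cont (R : realType) d (A : 'M[R]_d) : continuous (qform A).
Proof.
have -> : qform A = fun x => \sum_j (\sum_i x 0 i * A i j) * x 0 j.
  by apply: funext => x; rewrite qformE.
apply: sum_cont => j x.
apply: (@continuousM _ _ (fun x : 'rV[R]_d => \sum_i x 0 i * A i j)
   (fun x : 'rV[R]_d => x 0 j)); last exact: coord_continuous.
move: x; apply: sum_cont => i x.
apply: (@continuousM _ _ (fun x : 'rV[R]_d => x 0 i) (fun=> A i j)).
  exact: coord_continuous.
exact: cst_continuous.
Qed.

Lemma spectral_max (R : realType) d (A : 'M[R]_d.+1) : A^T = A ->
  exists l (v : 'rV[R]_d.+1),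
    [/\ v *m A = l *: v, qform 1 v = 1 & forall x, qform A x <= l * qform 1 x].
Proof.
move=> AT.
pose S := [set x : 'rV[R]_d.+1 | qform 1 x = 1].
have S0 : S !=set0.
  exists (delta_mx 0 0); rewrite /S /= qform1E (bigD1 ord0) //= big1.
    by rewrite mxE eqxx expr1n addr0.
  by move=> j /negPf j0; rewrite mxE j0 /= expr0n.
have clS : closed S.
  rewrite /S (_ : mkset _ = qform 1 @^-1` [set x | x = 1]) //.
  apply: preimage_closed; last exact: closed_eq.
  by move=> x _; exact: qform_cont.
have cB : compact [set v : 'rV[R]_d.+1 | forall i, `[(-1 : R), 1]%classic (v ord0 i)].
  exact: (@rV_compact R _ (fun=> `[(-1:R),1]%classic) (fun _ => @segment_compact R _ _)).
have cS : compact S.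
  apply: (subclosed_compact clS cB).
  move=> x; rewrite /S /= => Sx i.
  have : x 0 i ^+ 2 <= 1.
    rewrite -Sx qform1E (bigD1 i) //= lerDl.
    by apply: sumr_ge0 => j _; rewrite sqr_ge0.
  by rewrite in_itv /= expr2 => h; apply/andP; split; nra.
have [v Sv vmax] := compact_EVT_max S0 cS (continuous_subspaceT (@qform_cont _ _ A)).
move: Sv; rewrite inE /S /= => Sv.
pose l := qform A v.
have bnd x : qform A x <= l * qform 1 x.
  have [->|x0] := eqVneq x 0.
    by rewrite /qform !mul0mx mxE mulr0.
  have c0 := qform1_gt0 x0.
  pose a := (Num.sqrt (qform 1 x))^-1.
  have a2 : a ^+ 2 = (qform 1 x)^-1 by rewrite /a exprVn sqr_sqrtr // ltW.
  have : qform A (a *: x) <= l.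
    apply: vmax; rewrite inE /S /= qform_scale a2 mulVf //.
    exact: lt0r_neq0.
  rewrite qform_scale a2 ler_pdivrMl //.
  by rewrite mulrC.
exists l, v; split => //.
have psd x : 0 <= qform (l%:M - A) x by rewrite qformB qform_scalar subr_ge0.
have sym : (l%:M - A)^T = l%:M - A by rewrite linearB /= tr_scalar_mx AT.
have := @psd_zero _ _ _ v sym psd.
rewrite qformB qform_scalar Sv mulr1 subrr => /(_ erefl).
by rewrite mulmxBr mul_mx_scalar => /eqP; rewrite subr_eq0 => /eqP <-.
Qed.

Lemma eig_qform (R : realType) d (A : 'M[R]_d) w a :
  w *m A = a *: w -> qform A w = a * qform 1 w.
Proof. by move=> H; rewrite /qform H mulmx1 -scalemxAl mxE. Qed.

Lemma sup_eq (R : realType) (E : set R) l :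
  E l -> (forall a, E a -> a <= l) -> sup E = l.
Proof.
move=> El ub; apply/le_anti/andP; split.
  by apply: ge_sup; [exists l | exact: ub].
by apply: ub_le_sup => //; exists l => a Ea; exact: ub.
Qed.

Lemma lmax_spec (R : realType) d (A : 'M[R]_d.+1) : A^T = A ->
  (exists v, qform 1 v = 1 /\ qform A v = lambda_max A) /\
  forall x, qform A x <= lambda_max A * qform 1 x.
Proof.
move=> AT; have [l [v [vA v1 bnd]]] := spectral_max AT.
have -> : lambda_max A = l.
  apply: sup_eq => /=.
    apply/eigenvalueP; exists v => //; apply/eqP => v0.
    by move: v1; rewrite v0 /qform !mul0mx mxE => /eqP; rewrite eq_sym oner_eq0.
  move=> a /eigenvalueP [w wA w0].
  have := bnd w; rewrite (eig_qform wA) ler_pM2r //; exact: qform1_gt0.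
split => //; exists v; split => //.
by rewrite (eig_qform vA) v1 mulr1.
Qed.

Lemma lmin_spec (R : realType) d (A : 'M[R]_d.+1) : A^T = A ->
  (exists v, qform 1 v = 1 /\ qform A v = lambda_min A) /\
  forall x, lambda_min A * qform 1 x <= qform A x.
Proof.
move=> AT.
have sym : (- A)^T = - A by rewrite linearN /= AT.
have [l [v [vA v1 bnd]]] := spectral_max sym.
have -> : lambda_min A = - l.
  rewrite /lambda_min /inf; congr (- _).
  apply: sup_eq => /=.
    exists (- l); last by rewrite opprK.
    apply/eigenvalueP; exists v.
      by rewrite scaleNr -vA mulmxN opprK.
    apply/eqP => v0.
    by move: v1; rewrite v0 /qform !mul0mx mxE => /eqP; rewrite eq_sym oner_eq0.
  move=> b [a /eigenvalueP [w wA w0] <-].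
  have := bnd w; rewrite qformN (eig_qform wA) -mulNr ler_pM2r //.
  exact: qform1_gt0.
split.
  exists v; split => //.
  by rewrite -(opprK A) qformN (eig_qform vA) v1 mulr1.
move=> x; have := bnd x.
by rewrite qformN mulNr lerNl.
Qed.

Lemma bfZl (R : realType) d (B : 'M[R]_d) v w t : bf B (t *: v) w = t * bf B v w.
Proof. by rewrite /bf -!scalemxAl mxE. Qed.

Lemma bfNr (R : realType) d (B : 'M[R]_d) v w : bf B v (- w) = - bf B v w.
Proof. by rewrite -scaleN1r bfZr mulN1r. Qed.

Lemma qformNv (R : realType) d (B : 'M[R]_d) v : qform B (- v) = qform B v.
Proof. by rewrite -scaleN1r qform_scale sqrrN expr1n mul1r. Qed.

Lemma inv_lb (R : realType) d (M : 'M[R]_d) c u : M^T = M -> M \in unitmx ->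
  0 < c -> (forall x, 0 <= qform M x) -> (forall x, qform M x <= c * qform 1 x) ->
  qform 1 u <= c * qform (invmx M) u.
Proof.
move=> MT Mu c0 psd bnd.
set w := u *m invmx M.
have hu : u = w *m M by rewrite /w mulmxKV.
have e1 : qform (invmx M) u = qform M w.
  rewrite hu /qform (mulmxK Mu) trmx_mul MT.
  by rewrite mulmxA.
have e2 : bf M w (w *m M) = qform 1 (w *m M).
  by rewrite /bf /qform mulmx1 trmx_mul MT !mulmxA.
have eB : w *m (c%:M - M) = c *: w - w *m M by rewrite mulmxBr mul_mx_scalar.
have sym : (c%:M - M)^T = c%:M - M by rewrite linearB /= tr_scalar_mx MT.
have h1 := psd (w *m (c%:M - M)).
have h2 : 0 <= qform (c%:M - M) (w *m M).
  by rewrite qformB qform_scalar subr_ge0.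
rewrite eB qform_addv // bfNr bfZl e2 qformNv qform_scale in h1.
rewrite qformB qform_scalar in h2.
rewrite e1.
rewrite -hu in e2 h1 h2.
have : 0 <= c * (c * qform M w - qform 1 u) by rewrite mulrBr; nra.
by rewrite pmulr_rge0 // subr_ge0.
Qed.

Lemma inv_ub (R : realType) d (M : 'M[R]_d) m u : M^T = M -> M \in unitmx ->
  0 <= m -> (forall x, m * qform 1 x <= qform M x) ->
  m * qform (invmx M) u <= qform 1 u.
Proof.
move=> MT Mu m0 bnd.
set w := u *m invmx M.
have hu : u = w *m M by rewrite /w mulmxKV.
have e1 : qform (invmx M) u = qform M w.
  rewrite hu /qform (mulmxK Mu) trmx_mul MT.
  by rewrite mulmxA.
have eB : w *m M = w *m (M - m%:M) + m *: w by rewrite mulmxBr mul_mx_scalar subrK.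
have sym1 : (1 : 'M[R]_d)^T = 1 by rewrite trmx1.
have e3 : bf 1 (w *m (M - m%:M)) w = qform (M - m%:M) w.
  by rewrite /bf /qform mulmx1.
have h1 : 0 <= qform (M - m%:M) w by rewrite qformB qform_scalar subr_ge0.
have h0 := qform1_ge0 (w *m (M - m%:M)).
rewrite e1 hu eB qform_addv // bfZr e3 qform_scale.
rewrite qformB qform_scalar in h1 *.
have hw := qform1_ge0 w.
nra.
Qed.

Lemma jensen_scalar (R : realType) n (a : 'I_n -> R) : (0 < n)%N ->
  (n%:R^-1 * \sum_i a i) ^+ 2 <= n%:R^-1 * \sum_i a i ^+ 2.
Proof.
move=> n0; set mu := n%:R^-1 * \sum_i a i.
have nR : (n%:R : R) != 0 by rewrite pnatr_eq0 -lt0n.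
have nR0 : (0 : R) < n%:R by rewrite ltr0n.
have sa : \sum_i a i = n%:R * mu by rewrite /mu mulrA divff // mul1r.
have H : 0 <= \sum_i (a i - mu) ^+ 2 by apply: sumr_ge0 => i _; rewrite sqr_ge0.
have E : \sum_i (a i - mu) ^+ 2 = \sum_i a i ^+ 2 - 2 * mu * \sum_i a i + n%:R * mu ^+ 2.
  rewrite (eq_bigr (fun i => (a i ^+ 2 - 2 * mu * a i) + mu ^+ 2)); last by move=> i _; ring.
  by rewrite big_split /= sumrB -mulr_sumr sumr_const cardT size_enum_ord -[mu ^+ 2 *+ n]mulr_natl.
rewrite E sa in H.
rewrite ler_pdivlMl //.
nra.
Qed.

Lemma jensen (R : realType) d n (u : 'I_n -> 'rV[R]_d) : (0 < n)%N ->
  qform 1 (n%:R^-1 *: \sum_i u i) <= n%:R^-1 * \sum_i qform 1 (u i).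
Proof.
move=> n0; rewrite qform1E.
rewrite (eq_bigr (fun i => \sum_j u i 0 j ^+ 2)); last by move=> i _; rewrite qform1E.
rewrite exchange_big mulr_sumr; apply: ler_sum => j _.
rewrite mxE summxE; exact: jensen_scalar.
Qed.

Lemma grad_avg (R : realType) d n (F : 'I_n -> 'rV[R]_d -> R) x :
  (forall i, forall x, differentiable (F i) x) ->
  grad (fun x => n%:R^-1 * \sum_(i < n) F i x) x = n%:R^-1 *: \sum_i grad (F i) x.
Proof.
move=> dF; apply/rowP => j; rewrite !mxE summxE.
have -> : (fun x => n%:R^-1 * \sum_(i < n) F i x) =
   n%:R^-1 \*o (\sum_(i < n) F i) by rewrite fct_sumE.
rewrite deriveMl; last by apply: derivable_sum => i; exact: diff_derivable.
rewrite derive_sum; last by move=> i; exact: diff_derivable.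
by congr (_ * _); apply: eq_bigr => i _; rewrite mxE.
Qed.

Lemma spd_unit (R : realType) d (M : 'M[R]_d) : spd M -> M \in unitmx.
Proof.
move=> [MT pd]; apply/negPn/negP => Mu.
have : eigenvalue M 0.
  rewrite /eigenvalue /eigenspace (_ : (0 : R)%:M = 0) ?subr0 ?kermx_eq0 ?row_free_unit; last by apply/matrixP => i j; rewrite !mxE mul0rn.
  exact: Mu.
move=> /eigenvalueP [w wM w0].
have := pd w w0; rewrite (eig_qform wM) mul0r ltxx //.
Qed.

Lemma spd_psd (R : realType) d (M : 'M[R]_d) x : spd M -> 0 <= qform M x.
Proof.
move=> [_ pd]; have [->|x0] := eqVneq x 0.
  by rewrite /qform !mul0mx mxE.
exact: ltW (pd x x0).
Qed.

Lemma qform_zero_dim (R : realType) (M : 'M[R]_0) x : qform M x = 0.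
Proof. by rewrite /qform mxE big_ord0. Qed.

Unset Implicit Arguments.

Theorem mainTheorem7 (R : realType) (d n : nat) (F : 'I_n -> 'rV[R]_d -> R)
  (Ls : 'I_n -> 'M[R]_d) (L : 'M[R]_d) :
  (0 < n)%N ->
  (forall i, C1 (F i)) ->
  (forall i, spd (Ls i)) ->
  (forall i, lipschitz_grad (Ls i) (F i)) ->
  spd L ->
  lambda_min L *: L = n%:R^-1 *: \sum_(i < n) (lambda_max (Ls i) *: Ls i) ->
  lipschitz_grad L (fun x => n%:R^-1 * \sum_(i < n) F i x).
Proof.
move=> n0 C1F spdLs lipF spdL heq x y.
case: d F Ls L C1F spdLs lipF spdL heq x y => [|d] F Ls L C1F spdLs lipF spdL heq x y.
  by rewrite !qform_zero_dim.
have dF : forall i x, differentiable (F i) x by move=> i; case: (C1F i).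
rewrite !grad_avg // -scalerBr -sumrB.
set u := fun i => grad (F i) x - grad (F i) y.
set D := x - y.
have LT : L^T = L by case: spdL.
have [[v [v1 vL]] mbnd] := lmin_spec LT.
set m := lambda_min L in vL mbnd heq *.
have m0 : 0 < m.
  rewrite -vL; case: spdL => _ pd; apply: pd; apply/eqP => v0.
  by move: v1; rewrite v0 /qform !mul0mx mxE => /eqP; rewrite eq_sym oner_eq0.
have cpos i : 0 < lambda_max (Ls i).
  have [[w [w1 wL]] _] := lmax_spec (proj1 (spdLs i)).
  rewrite -wL; case: (spdLs i) => _ pd; apply: pd; apply/eqP => w0.
  by move: w1; rewrite w0 /qform !mul0mx mxE => /eqP; rewrite eq_sym oner_eq0.
have hi i : qform 1 (u i) <= lambda_max (Ls i) * qform (Ls i) D.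
  have LiT := proj1 (spdLs i).
  apply: (le_trans (inv_lb (u i) LiT (spd_unit (spdLs i)) (cpos i)
                      (fun x => spd_psd x (spdLs i)) (proj2 (lmax_spec LiT)))).
  rewrite ler_pM2l //.
  have := lipF i x y; rewrite ler_sqrt //; exact: spd_psd.
have nR0 : (0 : R) < n%:R by rewrite ltr0n.
have key : qform 1 (n%:R^-1 *: \sum_i u i) <= m * qform L D.
  apply: (le_trans (jensen u n0)).
  rewrite -qformZ heq qformZ qform_sum ler_pM2l ?invr_gt0 //.
  by apply: ler_sum => i _; rewrite qformZ; exact: hi.
rewrite ler_sqrt; last exact: spd_psd.
have := inv_ub (n%:R^-1 *: \sum_i u i) LT (spd_unit spdL) (ltW m0) mbnd.
move=> h; rewrite -(ler_pM2l m0); exact: le_trans h key.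
Qed.
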